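(* Let $M$ be a multigraph with $n$ vertices. Then $M$ is the double competition multigraph of an acyclic digraph if and only if there exist an ordering $(v_1,\ldots,v_n)$ of the vertices of $M$ and a double indexed edge clique partition $\{S_{ij}\mid i,j\in[n]\}$ of $M$ such that the following conditions hold: (I) for any $i,j\in[n]$, if $|A_i\cap B_j|\ge 2$, then $A_i\cap B_j=S_{ij}$; (IV) for any $i,j,k\in[n]$, $v_k\in S_{ij}$ implies $i<k<j$, where $A_i = S_{i*}\cup T^+_i$, $S_{i*} := \bigcup_{p\in[n]} S_{ip}$, $T^+_i := \{v_b \mid a,b\in[n],\ v_i\in S_{ab}\}$, and $B_j = S_{*j}\cup T^-_j$, $S_{*j} := \bigcup_{q\in[n]} S_{qj}$, $T^-_j := \{v_a \mid a,b\in[n],\ v_j\in S_{ab}\}$.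
   Context: A digraph $D$ is a pair $(V(D),A(D))$ with $A(D)$ a set of ordered pairs of vertices (arcs); $D$ is acyclic if it has no directed cycles (in particular no loops). $N^+_D(x)=\{v\mid (x,v)\in A(D)\}$ and $N^-_D(x)=\{v\mid (v,x)\in A(D)\}$. A multigraph $M$ (without loops) is a vertex set $V(M)$ together with a function $m_M$ assigning to each unordered pair $\{x,y\}$ of distinct vertices a nonnegative integer, the number of edges between $x$ and $y$. The double competition multigraph of a digraph $D$ is the multigraph $M$ with $V(M)=V(D)$ and $m_M(\{x,y\}) = |N^+_D(x)\cap N^+_D(y)|\cdot|N^-_D(x)\cap N^-_D(y)|$ for distinct $x,y$. A clique of $M$ is a set of vertices that are pairwise adjacent (i.e. $m_M\ge 1$ on every pair of distinct elements); the empty set and singletons count as cliques. An edge clique partition of $M$ is a family (multiset) $\mathcal{F}$ of cliques of $M$ such that any two distinct vertices $x,y$ are contained in exactly $m_M(\{x,y\})$ members of $\mathcal{F}$; a double indexed edge clique partition $\{S_{ij}\mid i,j\in[n]\}$ is such a family indexed by pairs $(i,j)\in[n]\times[n]$ (members may be empty). $[n]=\{1,\ldots,n\}$. *)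

(* Defs.v *)
From mathcomp Require Import all_boot.
Set Implicit Arguments.
Unset Strict Implicit.
Unset Printing Implicit Defensive.

(* A loopless multigraph on V
   is given by a symmetric multiplicity function [m : V -> V -> nat];
   only its values on pairs of distinct vertices are meaningful. *)

Definition outN (V : finType) (arc : rel V) (x : V) : {set V} := [set v | arc x v].
Definition inN (V : finType) (arc : rel V) (x : V) : {set V} := [set v | arc v x].

Definition acyclic (V : finType) (arc : rel V) : Prop :=
  forall x y : V, arc x y -> ~~ connect arc y x.

Definition is_double_competition_multigraph (V : finType) (arc : rel V)
  (m : V -> V -> nat) : Prop :=
  forall x y : V, x != y ->
    m x y = #|outN arc x :&: outN arc y| * #|inN arc x :&: inN arc y|.

Definition is_clique (V : finType) (m : V -> V -> nat) (C : {set V}) : Prop :=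
  forall x y : V, x \in C -> y \in C -> x != y -> 1 <= m x y.

Definition double_indexed_ECP (V : finType) (n : nat) (m : V -> V -> nat)
  (S : 'I_n -> 'I_n -> {set V}) : Prop :=
  (forall i j, is_clique m (S i j)) /\
  (forall x y : V, x != y ->
     #|[set p : 'I_n * 'I_n | (x \in S p.1 p.2) && (y \in S p.1 p.2)]| = m x y).

Definition Srow (V : finType) (n : nat) (S : 'I_n -> 'I_n -> {set V}) (i : 'I_n)
  : {set V} := \bigcup_(p < n) S i p.
Definition Scol (V : finType) (n : nat) (S : 'I_n -> 'I_n -> {set V}) (j : 'I_n)
  : {set V} := \bigcup_(q < n) S q j.
Definition Tplus (V : finType) (n : nat) (v : 'I_n -> V)
  (S : 'I_n -> 'I_n -> {set V}) (i : 'I_n) : {set V} :=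
  [set v p.2 | p : 'I_n * 'I_n & v i \in S p.1 p.2].
Definition Tminus (V : finType) (n : nat) (v : 'I_n -> V)
  (S : 'I_n -> 'I_n -> {set V}) (j : 'I_n) : {set V} :=
  [set v p.1 | p : 'I_n * 'I_n & v j \in S p.1 p.2].
Definition Aset (V : finType) (n : nat) (v : 'I_n -> V)
  (S : 'I_n -> 'I_n -> {set V}) (i : 'I_n) : {set V} :=
  Srow S i :|: Tplus v S i.
Definition Bset (V : finType) (n : nat) (v : 'I_n -> V)
  (S : 'I_n -> 'I_n -> {set V}) (j : 'I_n) : {set V} :=
  Scol S j :|: Tminus v S j.

(* Main.v *)
Require Import Defs.
From mathcomp Require Import all_boot.

Set Implicit Arguments.
Unset Strict Implicit.
Unset Printing Implicit Defensive.

Lemma card_pre (V : finType) n (v : 'I_n -> V) (bv : bijective v) (A : {set V}) :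
  #|[set i | v i \in A]| = #|A|.
Proof.
have [g vg gv] := bv.
rewrite -(card_imset _ (bij_inj bv)); apply: eq_card => u.
apply/imsetP/idP => [[i]|hu]; first by rewrite inE => hi ->.
by exists (g u); rewrite ?inE gv.
Qed.

Lemma count_pairs (V : finType) n (v : 'I_n -> V) (bv : bijective v) (arc : rel V)
  (S : 'I_n -> 'I_n -> {set V}) x y :
  (forall i j, (x \in S i j) && (y \in S i j) =
     [&& arc (v i) x, arc (v i) y, arc x (v j) & arc y (v j)]) ->
  #|[set p : 'I_n * 'I_n | (x \in S p.1 p.2) && (y \in S p.1 p.2)]| =
  #|outN arc x :&: outN arc y| * #|inN arc x :&: inN arc y|.
Proof.
move=> H.
rewrite mulnC -(card_pre bv (inN arc x :&: inN arc y)) -(card_pre bv (outN arc x :&: outN arc y)).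
rewrite -cardsX; apply: eq_card => -[i j].
rewrite inE /= H in_setX /outN /inN !inE /=; by do 4 case: (arc _ _).
Qed.

Section Topo.
Variables (V : finType) (arc : rel V).
Hypothesis ac : acyclic arc.

Definition rank (x : V) := #|[set z | connect arc z x]|.

Lemma rank_lt x y : arc x y -> rank x < rank y.
Proof.
move=> h; apply: proper_card; apply/properP; split.
  apply/subsetP => z; rewrite !inE => hz; exact: connect_trans hz (connect1 h).
by exists y; rewrite inE ?connect0 //; exact: ac.
Qed.

Lemma topo n (hn : #|V| = n) :
  exists v : 'I_n -> V, bijective v /\ forall i j, arc (v i) (v j) -> i < j.
Proof.
pose le := [rel a b : V | rank a <= rank b].
pose s := sort le (enum V).
have ss : size s = n by rewrite size_sort -cardT hn.
have us : uniq s by rewrite sort_uniq enum_uniq.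
have sorts : sorted le s by apply: sort_sorted => a b; exact: leq_total.
pose v (i : 'I_n) := nth (enum_val (cast_ord (esym hn) i)) s i.
have vE x0 i : v i = nth x0 s i by apply: set_nth_default; rewrite ss.
have vinj : injective v.
  move=> i j; rewrite (vE (v i) i) (vE (v i) j) => e.
  apply: val_inj; apply/eqP; rewrite -(nth_uniq (v i) _ _ us) ?ss ?ltn_ord //; exact/eqP.
exists v; split.
  by apply: (inj_card_bij vinj); rewrite card_ord hn.
move=> i j h; rewrite ltnNge; apply/negP => hji.
have := @sorted_leq_nth _ le (fun a b c => @leq_trans (rank a) (rank b) (rank c))
  (fun a => leqnn (rank a)) (v i) s sorts j i.
rewrite !inE ss !ltn_ord => /(_ isT isT hji) /=.
by rewrite -!vE leqNgt rank_lt.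
Qed.
End Topo.

Theorem theorem4 (V : finType) (n : nat) (hn : #|V| = n)
  (m : V -> V -> nat) (msym : forall x y : V, m x y = m y x) :
  (exists arc : rel V, acyclic arc /\ is_double_competition_multigraph arc m)
  <->
  (exists (v : 'I_n -> V) (S : 'I_n -> 'I_n -> {set V}),
     bijective v /\ double_indexed_ECP m S /\
     (forall i j : 'I_n, 2 <= #|Aset v S i :&: Bset v S j| ->
        Aset v S i :&: Bset v S j = S i j) /\
     (forall i j k : 'I_n, v k \in S i j -> (i < k < j)%N)).
Proof.
split.
- move=> [arc [ac dc]].
  have [v [bv vo]] := topo ac hn.
  pose S i j := outN arc (v i) :&: inN arc (v j).
  have SE i j u : (u \in S i j) = arc (v i) u && arc u (v j) by rewrite !inE.
  exists v, S; split; first exact: bv.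
  split; [split|split].
  + move=> i j x y hx hy nxy; rewrite dc // muln_gt0.
    rewrite SE in hx; rewrite SE in hy.
    move/andP: hx => [hx1 hx2]; move/andP: hy => [hy1 hy2].
    apply/andP; split; apply/card_gt0P.
      by exists (v j); rewrite !inE hx2 hy2.
    by exists (v i); rewrite !inE hx1 hy1.
  + move=> x y nxy; rewrite dc //; apply: (count_pairs bv) => i j.
    rewrite !SE; by do 4 case: (arc _ _).
  + move=> i j _.
    apply/setP => u; apply/idP/idP.
      rewrite !inE => /andP[hA hB]; apply/andP; split.
        move: hA => /orP[/bigcupP[p _]|/imsetP[[a b]]].
          by rewrite SE => /andP[].
        by rewrite inE SE /= => /andP[_ h] ->.
      move: hB => /orP[/bigcupP[p _]|/imsetP[[a b]]].
        by rewrite SE => /andP[].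
      by rewrite inE SE /= => /andP[h _] ->.
    move=> hu; rewrite inE /Aset /Bset /Srow /Scol !inE; apply/andP; split; apply/orP; left.
      by apply/bigcupP; exists j.
    by apply/bigcupP; exists i.
  + move=> i j k; rewrite SE => /andP[h1 h2]; by rewrite (vo _ _ h1) (vo _ _ h2).
- move=> [v [S [bv [[Scl Scnt] [HI HIV]]]]].
  have [g vg gv] := bv.
  have vinj := bij_inj bv.
  have key i j : (v j \in Aset v S i) = (v i \in Bset v S j).
    rewrite /Aset /Bset /Srow /Scol /Tplus /Tminus !inE.
    apply/orP/orP => [[/bigcupP[p _ h]|/imsetP[[a b]]]|[/bigcupP[q _ h]|/imsetP[[a b]]]].
    * by right; apply/imsetP; exists (i, p); rewrite ?inE.
    * rewrite inE /= => h /vinj e; subst b.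
      by left; apply/bigcupP; exists a.
    * by right; apply/imsetP; exists (q, j); rewrite ?inE.
    * rewrite inE /= => h /vinj e; subst a.
      by left; apply/bigcupP; exists b.
  pose arc := [rel x y : V | y \in Aset v S (g x)].
  have arcE i j : arc (v i) (v j) = (v j \in Aset v S i) by rewrite /= vg.
  have arcB x y : arc x y = (x \in Bset v S (g y)).
    by rewrite -{1}(gv x) -{1}(gv y) arcE key !gv.
  have arc_lt x y : arc x y -> g x < g y.
    rewrite -{1}(gv x) -{1}(gv y) arcE /Aset /Srow /Tplus !inE.
    case/orP => [/bigcupP[p _ h]|/imsetP[[a b]]].
      by case/andP: (HIV _ _ _ h).
    rewrite inE /= => h /vinj e; subst b.
    by case/andP: (HIV _ _ _ h).
  exists arc; split.
    move=> x y h; apply/negP => /connectP[p pp ex].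
    have := arc_lt _ _ h; rewrite ex.
    have : g y <= g (last y p).
      elim: p y pp {h ex} => [|z p IH] y //= /andP[h1 h2].
      exact: ltnW (leq_trans (arc_lt _ _ h1) (IH _ h2)).
    by rewrite leqNgt => /negbTE ->.
  move=> x y nxy; rewrite -Scnt //; apply: (count_pairs bv) => i j.
  have e1 u : arc (v i) u = (u \in Aset v S i) by rewrite /= vg.
  have e2 u : arc u (v j) = (u \in Bset v S j) by rewrite (arcB u (v j)) vg.
  rewrite /= !vg !key !gv.
  have SA k l u : u \in S k l -> (u \in Aset v S k) && (u \in Bset v S l).
    move=> hu; rewrite /Aset /Bset /Srow /Scol !inE.
    by apply/andP; split; apply/orP; left; apply/bigcupP; [exists l|exists k].
  apply/idP/idP.
    by move=> /andP[/SA/andP[-> ->] /SA/andP[-> ->]].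
  move=> /and4P[xa ya xb yb].
  have h2 : 2 <= #|Aset v S i :&: Bset v S j|.
    have := cards2 x y; rewrite nxy => <-; apply: subset_leq_card; apply/subsetP => u.
    by move=> /set2P[]->; rewrite in_setI ?xa ?xb ?ya ?yb.
  by rewrite -(HI _ _ h2) !in_setI xa xb ya yb.
Qed.
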